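(* Suppose $\mathcal Z$ and $\mathcal U$ are compact and contain the origin, $(A,B)$ is controllable and $(A,C)$, $(A,H)$ are observable, and the simulated ROM trajectory satisfies $\bar u_k\in\mathcal U$ and $H\bar x_k\in\mathcal Z$ for all $k\ge\underline k$. Then the set $\bar{\mathcal X}$ defined in the context is compact (every $b_{\bar x,l}$ is finite) and $\bar x_k\in\bar{\mathcal X}$ for all $k\ge\underline k$.
   Context: $A\in\mathbb R^{n\times n}$, $B\in\mathbb R^{n\times m}$, $C\in\mathbb R^{p\times n}$, $H\in\mathbb R^{o\times n}$. Polytopes $\mathcal Z=\{z:H_zz\le b_z\}\subset\mathbb R^o$ and $\mathcal U=\{u:H_uu\le b_u\}\subset\mathbb R^m$. The simulated ROM is $\bar x_{k+1}=A\bar x_k+B\bar u_k$ for all $k\ge\underline k$. Fix an integer $\bar i\ge n-1$. Let $H_{\bar x}=[I,\,-I]^T\in\mathbb R^{2n\times n}$ with rows $h_{\bar x,l}^T$, $l=1,\dots,2n$. Define $b_{\bar x,l}$ as the optimal value of the linear program: maximize $h_{\bar x,l}^T\bar x_0$ over $\bar x_0,\dots,\bar x_{\bar i}$ and $\bar u_0,\dots,\bar u_{\bar i-1}$ subject to $\bar x_{i+1}=A\bar x_i+B\bar u_i$, $\bar u_i\in\mathcal U$ for $i=0,\dots,\bar i-1$, and $H\bar x_i\in\mathcal Z$ for $i=0,\dots,\bar i$. Define $\bar{\mathcal X}=\{\bar x:H_{\bar x}\bar x\le b_{\bar x}\}$. *)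

(* Defs.v *)
From HB Require Import structures.
From mathcomp Require Import all_boot all_order all_algebra.
From mathcomp Require Import all_classical all_reals all_analysis.
Set Implicit Arguments. Unset Strict Implicit. Unset Printing Implicit Defensive.
Import Order.TTheory GRing.Theory Num.Theory.
Import numFieldNormedType.Exports.
Local Open Scope classical_set_scope.
Local Open Scope ring_scope.

Definition polyset (R : realType) (o q : nat) (Hp : 'M[R]_(q, o)) (bp : 'cV[R]_q)
  : set 'cV[R]_o := [set z | forall i : 'I_q, (Hp *m z) i 0 <= bp i 0].

Definition ctrb_mx (R : realType) (n m : nat) (A : 'M[R]_n) (B : 'M[R]_(n, m)) :=
  \mxrow_(k < n) (A ^+ k *m B).
Definition obsv_mx (R : realType) (n p : nat) (A : 'M[R]_n) (C : 'M[R]_(p, n)) :=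
  \mxcol_(k < n) (C *m A ^+ k).

Definition controllable (R : realType) (n m : nat) (A : 'M[R]_n) (B : 'M[R]_(n, m)) :=
  \rank (ctrb_mx A B) = n.
Definition observable (R : realType) (n p : nat) (A : 'M[R]_n) (C : 'M[R]_(p, n)) :=
  \rank (obsv_mx A C) = n.

Definition Hxbar (R : realType) (n : nat) : 'M[R]_(n + n, n) :=
  col_mx 1%:M (- 1%:M).

Definition lp_feasible (R : realType) (n m o qz qu : nat)
  (A : 'M[R]_n) (B : 'M[R]_(n, m)) (H : 'M[R]_(o, n))
  (Hz : 'M[R]_(qz, o)) (bz : 'cV[R]_qz) (Hu : 'M[R]_(qu, m)) (bu : 'cV[R]_qu)
  (ibar : nat) (xs : nat -> 'cV[R]_n) (us : nat -> 'cV[R]_m) : Prop :=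
  (forall i, (i < ibar)%N -> xs i.+1 = A *m xs i + B *m us i) /\
  (forall i, (i < ibar)%N -> polyset Hu bu (us i)) /\
  (forall i, (i <= ibar)%N -> polyset Hz bz (H *m xs i)).

(* b_{xbar,l}: optimal value (in the extended reals; sup of the objective over
   the feasible set) of: maximize h_l^T xbar_0 *)
Definition bxbar (R : realType) (n m o qz qu : nat)
  (A : 'M[R]_n) (B : 'M[R]_(n, m)) (H : 'M[R]_(o, n))
  (Hz : 'M[R]_(qz, o)) (bz : 'cV[R]_qz) (Hu : 'M[R]_(qu, m)) (bu : 'cV[R]_qu)
  (ibar : nat) (l : 'I_(n + n)) : \bar R :=
  ereal_sup [set ((row l (Hxbar R n) *m xs 0%N) 0 0)%:E |
              xs in [set xs | exists us, lp_feasible A B H Hz bz Hu bu ibar xs us]].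

Definition Xbar (R : realType) (n m o qz qu : nat)
  (A : 'M[R]_n) (B : 'M[R]_(n, m)) (H : 'M[R]_(o, n))
  (Hz : 'M[R]_(qz, o)) (bz : 'cV[R]_qz) (Hu : 'M[R]_(qu, m)) (bu : 'cV[R]_qu)
  (ibar : nat) : set 'cV[R]_n :=
  [set x | forall l : 'I_(n + n),
      (((Hxbar R n) *m x) l 0)%:E <= bxbar A B H Hz bz Hu bu ibar l]%E.

(* Main.v *)
Require Import Defs.
From HB Require Import structures.
From mathcomp Require Import all_boot all_order all_algebra.
From mathcomp Require Import all_classical all_reals all_analysis.
From Stdlib Require Import Lia.
From mathcomp Require Import zify.
Import Order.TTheory GRing.Theory Num.Theory.
Import numFieldNormedType.Exports.
Local Open Scope classical_set_scope.
Local Open Scope ring_scope.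
Section Aux.
Variable R : realType.

Lemma entry_le_norm a b (M : 'M[R]_(a,b)) i j : `|M i j| <= `|M|.
Proof.
have -> : `|M| = mx_norm M by [].
rewrite mx_normrE; apply/bigmax_geP; right; by exists (i, j).
Qed.

Arguments entry_le_norm {a b}.
Lemma norm_tr a b (M : 'M[R]_(a,b)) : `|M^T| <= `|M|.
Proof.
have -> : `|M^T| = mx_norm M^T by [].
rewrite mx_normrE; apply/bigmax_leP; split => // -[i j] _ /=.
by rewrite mxE entry_le_norm.
Qed.

Lemma trmx_cont a b : continuous (@trmx R a b).
Proof.
move=> x; apply/(@cvgrPdist_lt _ _ _ (nbhs x) (nbhs_filter x)) => e e0; near=> y.
rewrite -linearB /=; have h := @norm_tr _ _ (x - y); apply: le_lt_trans h _.
near: y; by apply: (@cvgr_dist_lt _ _ _ (nbhs x) _ id x cvg_id).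
Unshelve. all: by end_near. Qed.

Definition bnd T a b (P : set T) (f : T -> 'M[R]_(a,b)) :=
  exists c : R, 0 <= c /\ forall t, P t -> forall i j, `|f t i j| <= c.
Arguments bnd {T a b}.

Lemma bnd0 T a b (P : set T) : bnd P (fun _ => (0 : 'M[R]_(a,b))).
Proof. by exists 0; split => // t _ i j; rewrite mxE normr0. Qed.

Lemma bndD T a b (P : set T) (f g : T -> 'M[R]_(a,b)) :
  bnd P f -> bnd P g -> bnd P (fun t => f t + g t).
Proof.
move=> [c [c0 hc]] [d [d0 hd]]; exists (c + d); split; first exact: addr_ge0.
move=> t Pt i j; rewrite mxE; apply: le_trans (ler_normD _ _) _.
by apply: lerD; [apply: hc|apply: hd].
Qed.

Lemma bndN T a b (P : set T) (f : T -> 'M[R]_(a,b)) :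
  bnd P f -> bnd P (fun t => - f t).
Proof.
move=> [c [c0 hc]]; exists c; split => // t Pt i j; rewrite mxE normrN; exact: hc.
Qed.

Lemma bndM T a b d (P : set T) (M : 'M[R]_(d,a)) (f : T -> 'M[R]_(a,b)) :
  bnd P f -> bnd P (fun t => M *m f t).
Proof.
move=> [c [c0 hc]]; exists (c * \sum_i \sum_k `|M i k|); split.
  by apply: mulr_ge0 => //; apply: sumr_ge0 => i _; apply: sumr_ge0.
move=> t Pt i j; rewrite mxE; apply: le_trans (ler_norm_sum _ _ _) _.
apply: (@le_trans _ _ (c * \sum_k `|M i k|)).
  rewrite mulr_sumr; apply: ler_sum => k _; rewrite normrM mulrC.
  by apply: ler_wpM2r => //; apply: hc.
apply: ler_wpM2l => //.
rewrite (bigD1 i) //= lerDl; apply: sumr_ge0 => i' _; exact: sumr_ge0.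
Qed.

Lemma bnd_sum T a b (P : set T) (I : eqType) (s : seq I) (g : I -> T -> 'M[R]_(a,b)) :
  (forall k, k \in s -> bnd P (g k)) -> bnd P (fun t => \sum_(k <- s) g k t).
Proof.
elim: s => [|x s IH] hs.
  by under eq_fun do rewrite big_nil; apply: bnd0.
under eq_fun do rewrite big_cons.
apply: bndD; first by apply: hs; rewrite mem_head.
by apply: IH => k ks; apply: hs; rewrite in_cons ks orbT.
Qed.

Lemma bnd_compact T a b (P : set T) (S : set 'M[R]_(a,b)) (f : T -> 'M[R]_(a,b)) :
  compact S -> (forall t, P t -> S (f t)) -> bnd P f.
Proof.
move=> /compact_bounded [M [Mr HM]] hS.
exists (`|M| + 1); split; first by apply: addr_ge0.
move=> t Pt i j; apply: le_trans (entry_le_norm _ i j) _.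
apply: (HM (`|M| + 1)); last exact: hS.
by apply: le_lt_trans (real_ler_norm Mr) _; rewrite ltrDl.
Qed.

Lemma bnd_ext T a b (P : set T) (f g : T -> 'M[R]_(a,b)) :
  (forall t, P t -> f t = g t) -> bnd P f -> bnd P g.
Proof.
move=> e [c [c0 hc]]; exists c; split => // t Pt i j; rewrite -e //; exact: hc.
Qed.

Lemma HxE n (x : 'cV[R]_n) : Hxbar R n *m x = col_mx x (- x).
Proof. by rewrite /Hxbar mul_col_mx mulNmx !mul1mx. Qed.

End Aux.
Arguments bnd {R T a b}.
Arguments bnd0 {R T a b P}.
Arguments bndD {R T a b P f g}.
Arguments bndN {R T a b P f}.
Arguments bndM {R T a b d P} M {f}.
Arguments bnd_sum {R T a b P I} s g.
Arguments bnd_compact {R T a b P S f}.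
Arguments bnd_ext {R T a b P} f {g}.
Arguments HxE {R n}.
Arguments trmx_cont {R a b}.

Theorem proposition1 (R : realType) (n m p o qz qu : nat)
  (A : 'M[R]_n) (B : 'M[R]_(n, m)) (C : 'M[R]_(p, n)) (H : 'M[R]_(o, n))
  (Hz : 'M[R]_(qz, o)) (bz : 'cV[R]_qz) (Hu : 'M[R]_(qu, m)) (bu : 'cV[R]_qu)
  (ibar kbar : nat) (xbar : nat -> 'cV[R]_n) (ubar : nat -> 'cV[R]_m) :
  (n.-1 <= ibar)%N ->
  compact (polyset Hz bz) -> polyset Hz bz 0 ->
  compact (polyset Hu bu) -> polyset Hu bu 0 ->
  controllable A B -> observable A C -> observable A H ->
  (forall k, (kbar <= k)%N -> xbar k.+1 = A *m xbar k + B *m ubar k) ->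
  (forall k, (kbar <= k)%N -> polyset Hu bu (ubar k)) ->
  (forall k, (kbar <= k)%N -> polyset Hz bz (H *m xbar k)) ->
  (forall l, bxbar A B H Hz bz Hu bu ibar l \is a fin_num) /\
  compact (Xbar A B H Hz bz Hu bu ibar) /\
  (forall k, (kbar <= k)%N -> Xbar A B H Hz bz Hu bu ibar (xbar k)).
Proof.
move=> hib cZ Z0 cU U0 _ _ obsH hx hu hz.
pose P : set ((nat -> 'cV[R]_n) * (nat -> 'cV[R]_m)) :=
  fun t => lp_feasible A B H Hz bz Hu bu ibar t.1 t.2.
have hW : forall k, (k <= ibar)%N -> bnd P (fun t => t.1 k - A ^+ k *m t.1 0%N).
  elim => [|k IH] hk.
    apply: bnd_ext (bnd0) => t _; by rewrite expr0 mul1mx subrr.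
  have hk' : (k < ibar)%N by [].
  have bu' : bnd P (fun t => t.2 k).
    apply: (bnd_compact cU) => t Pt; exact: Pt.2.1 k hk'.
  apply: bnd_ext _ (bndD (bndM A (IH (ltnW hk))) (bndM B bu')) => t Pt /=.
  rewrite (Pt.1 k hk') exprS mulmxBr mulmxA.
  have -> : A *m A ^+ k = A * A ^+ k by [].
  by rewrite addrAC.
have hHA : forall k, (k <= ibar)%N -> bnd P (fun t => H *m A ^+ k *m t.1 0%N).
  move=> k hk.
  have bz' : bnd P (fun t => H *m t.1 k).
    apply: (bnd_compact cZ) => t Pt; exact: Pt.2.2 k hk.
  apply: bnd_ext _ (bndD bz' (bndN (bndM H (hW k hk)))) => t _ /=.
  by rewrite mulmxBr opprB addrC subrK mulmxA.
have /row_fullP [L hL] : row_full (obsv_mx A H) by rewrite /row_full obsH.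
have hx0 : bnd P (fun t => t.1 0%N).
  apply: (bnd_ext (fun t => L *m obsv_mx A H *m t.1 0%N)).
    by move=> t _; rewrite hL mul1mx.
  apply: (bnd_ext (fun t => \sum_(k < n) submxrow L k *m (H *m A ^+ k) *m t.1 0%N)).
    by move=> t _; rewrite /obsv_mx -mulmx_suml -mul_mxrow_mxcol submxrowK.
  apply: bnd_sum => k _.
  apply: (bnd_ext (fun t => submxrow L k *m (H *m A ^+ k *m t.1 0%N))).
    by move=> t _; rewrite mulmxA.
  apply: bndM; apply: hHA.
  have := ltn_ord k; lia.
case: hx0 => c [c0 hc].
have valE : forall (x : 'cV[R]_n) (l : 'I_(n + n)),
    (row l (Hxbar R n) *m x) 0 0 = (Hxbar R n *m x) l 0.
  by move=> x l; rewrite -row_mul mxE.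
have fin : forall l, bxbar A B H Hz bz Hu bu ibar l \is a fin_num.
  move=> l.
  have s0 : (0%:E <= bxbar A B H Hz bz Hu bu ibar l)%E.
    apply: ereal_sup_ubound; exists (fun _ => 0).
      exists (fun _ => 0); split; [|split].
      - by move=> i _; rewrite !mulmx0 addr0.
      - by move=> i _.
      - by move=> i _; rewrite mulmx0.
    by rewrite mulmx0 mxE.
  have sc : (bxbar A B H Hz bz Hu bu ibar l <= c%:E)%E.
    apply: ge_ereal_sup => y [xs [us F] <-]; rewrite lee_fin valE HxE.
    apply: le_trans (ler_norm _) _.
    rewrite mxE; case: splitP => j _; rewrite ?mxE ?normrN;
      exact: (hc (xs, us) F).
  by rewrite ge0_fin_numE // (le_lt_trans sc) // ltry.
split; first exact: fin.
split.
  set bl := fun l => fine (bxbar A B H Hz bz Hu bu ibar l).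
  have blE : forall l, bxbar A B H Hz bz Hu bu ibar l = (bl l)%:E.
    by move=> l; rewrite /bl fineK.
  have -> : Xbar A B H Hz bz Hu bu ibar = (fun v : 'rV[R]_n => v^T) @`
      [set v : 'rV[R]_n | forall i, `[- bl (rshift n i), bl (lshift n i)]%classic (v ord0 i)].
    rewrite predeqE => x; split.
      move=> Xx; exists x^T; last by rewrite trmxK.
      move=> i /=; rewrite mxE in_itv /=.
      have h1 := Xx (lshift n i); have h2 := Xx (rshift n i).
      rewrite blE lee_fin HxE in h1; rewrite blE lee_fin HxE in h2.
      rewrite col_mxEu in h1; rewrite col_mxEd mxE in h2.
      by rewrite h1 andbT lerNl.
    move=> [v Bv <-] l; rewrite blE lee_fin HxE mxE.
    case: splitP => i hi.
      have -> : l = lshift n i by apply: val_inj.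
      by have := Bv i; rewrite /= in_itv /= mxE => /andP[].
    have -> : l = rshift n i by apply: val_inj.
    by have := Bv i; rewrite /= in_itv /= !mxE lerNl => /andP[].
  apply: continuous_compact.
    by apply: continuous_subspaceT; exact: trmx_cont.
  apply: (@rV_compact _ _ (fun i => `[- bl (rshift n i), bl (lshift n i)]%classic)) => i.
  exact: segment_compact.
move=> k hk l.
apply: ereal_sup_ubound; exists (fun i => xbar (k + i)%N).
  exists (fun i => ubar (k + i)%N); split; [|split].
  - by move=> i _ /=; rewrite addnS hx // (leq_trans hk (leq_addr _ _)).
  - by move=> i _; apply: hu; exact: (leq_trans hk (leq_addr _ _)).
  - by move=> i _; apply: hz; exact: (leq_trans hk (leq_addr _ _)).
by rewrite valE addn0.
Qed.
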